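(* Let $\mathcal{Q}$, $\mathcal{S}$, $p_1,\dots,p_4$ be as in the context. If $\mathcal{Q}$ has no base points in $\mathbb{P}^2(\mathbb{K})$, then $\gcd(p_1,p_2,p_3,p_4)=1$.
   Context: $\mathbb{K}$ is an algebraically closed field of characteristic zero and $\Sigma\subset\mathbb{P}^3(\mathbb{K})$ a surface. $\mathcal{Q}=(q_1:\cdots:q_4)$ is a rational parametrization of $\Sigma$ ($q_i\in\mathbb{K}[t_1,t_2,t_3]$ homogeneous of the same degree, $\gcd(q_1,\dots,q_4)=1$, image dense in $\Sigma$). $\mathcal{S}=(s_1:s_2:s_3):\mathbb{P}^2(\mathbb{K})\dashrightarrow\mathbb{P}^2(\mathbb{K})$ is a dominant rational map with $s_i$ homogeneous of the same degree and $\gcd(s_1,s_2,s_3)=1$. $p_i=q_i(s_1,s_2,s_3)$ for $i=1,\dots,4$. A base point of $\mathcal{Q}$ is a point $A\in\mathbb{P}^2(\mathbb{K})$ with $q_1(A)=\cdots=q_4(A)=0$. *)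

(* Defs.v *)
From HB Require Import structures.
From mathcomp Require Import all_boot all_order all_algebra.
From mathcomp Require Import mpoly.

Set Implicit Arguments.
Unset Strict Implicit.
Unset Printing Implicit Defensive.

Import GRing.Theory.
Local Open Scope ring_scope.

Section Defs.
Variable K : closedFieldType.

(* a point of P^(n-1)(K), given by homogeneous coordinates: a nonzero vector *)
Definition nonzero_vec n (v : 'I_n -> K) : Prop := exists i, v i != 0.

Definition mdivides n (d p : {mpoly K[n]}) : Prop := exists c, p = d * c.

Definition mconst n (p : {mpoly K[n]}) : Prop := (msize p <= 1)%N.

Definition gcd_is_one n (I : finType) (f : I -> {mpoly K[n]}) : Prop :=
  forall d, (forall i, mdivides d (f i)) -> mconst d.

Definition homog_same_deg n (I : finType) (f : I -> {mpoly K[n]}) : Prop :=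
  exists deg : nat, forall i, f i \is deg.-homog.

Definition map_at n (I : finType) (f : I -> {mpoly K[n]}) (v : 'I_n -> K) :
  I -> K := fun i => (f i).@[v].

Definition is_base_point n (I : finType) (f : I -> {mpoly K[n]})
  (A : 'I_n -> K) : Prop := nonzero_vec A /\ forall i, (f i).@[A] = 0.

(* the rational map P^(n-1) --> P^(m-1) defined by f has Zariski-dense image
   in the closed set {x | P x}: its image (at points where it is defined)
   lies in {x | P x}, and every homogeneous polynomial vanishing on the image
   vanishes on the whole of {x | P x}. *)
Definition image_dense_in n m (f : 'I_m -> {mpoly K[n]})
  (P : ('I_m -> K) -> Prop) : Prop :=
  (forall v, nonzero_vec v -> nonzero_vec (map_at f v) -> P (map_at f v)) /\
  (forall (G : {mpoly K[m]}) (e : nat), G \is e.-homog ->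
     (forall v, nonzero_vec v -> nonzero_vec (map_at f v) ->
        G.@[map_at f v] = 0) ->
     forall x, nonzero_vec x -> P x -> G.@[x] = 0).

Definition proj_surface (F : {mpoly K[4]}) : Prop :=
  F != 0 /\ exists deg : nat, (0 < deg)%N /\ F \is deg.-homog.

Definition zero_set m (F : {mpoly K[m]}) : ('I_m -> K) -> Prop :=
  fun x => nonzero_vec x /\ F.@[x] = 0.

Definition dominant n m (f : 'I_m -> {mpoly K[n]}) : Prop :=
  image_dense_in f (fun x => nonzero_vec x).

End Defs.

(* Main.v *)
Require Import Defs.
From HB Require Import structures.
From mathcomp Require Import all_boot all_order all_algebra.
From mathcomp Require Import mpoly.
From Stdlib Require Import Classical.
From mathcomp Require Import zify.
Set Implicit Arguments.
Unset Strict Implicit.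
Unset Printing Implicit Defensive.
Import GRing.Theory.
Local Open Scope ring_scope.


Definition rdvd (R : ringType) (a b : R) := exists c, b = a * c.
Definition rprime (R : comUnitRingType) (p : R) :=
  [/\ p != 0, p \notin GRing.unit & forall x y, rdvd p (x * y) -> rdvd p x \/ rdvd p y].
Definition rirred (R : comUnitRingType) (p : R) :=
  [/\ p != 0, p \notin GRing.unit & forall x y, p = x * y -> x \is a GRing.unit \/ y \is a GRing.unit].

Section RdvdTheory.
Variable R : comRingType.
Implicit Types a b c : R.
Lemma rdvd_refl a : rdvd a a. Proof. by exists 1; rewrite mulr1. Qed.
Lemma rdvd0 a : rdvd a 0. Proof. by exists 0; rewrite mulr0. Qed.
Lemma rdvd_mulr a b c : rdvd a b -> rdvd a (b * c).
Proof. by case=> d ->; exists (d * c); rewrite mulrA. Qed.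
Lemma rdvd_mull a b c : rdvd a b -> rdvd a (c * b).
Proof. by rewrite mulrC; apply: rdvd_mulr. Qed.
Lemma rdvd_add a b c : rdvd a b -> rdvd a c -> rdvd a (b + c).
Proof. by case=> d -> [e ->]; exists (d + e); rewrite mulrDr. Qed.
Lemma rdvd_opp a b : rdvd a b -> rdvd a (- b).
Proof. by case=> d ->; exists (- d); rewrite mulrN. Qed.
Lemma rdvd_sub a b c : rdvd a b -> rdvd a c -> rdvd a (b - c).
Proof. by move=> h1 h2; apply: rdvd_add => //; apply: rdvd_opp. Qed.
Lemma rdvd_trans a b c : rdvd a b -> rdvd b c -> rdvd a c.
Proof. by case=> d -> [e ->]; exists (d * e); rewrite mulrA. Qed.
Lemma rdvd_mul2 a b c : rdvd a b -> rdvd (c * a) (c * b).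
Proof. by case=> d ->; exists d; rewrite mulrA. Qed.
End RdvdTheory.

Lemma ex_minP (A : nat -> Prop) n : A n -> exists m, A m /\ forall k, A k -> (m <= k)%N.
Proof.
elim: n {-2}n (leqnn n) => [|N IH] n.
  rewrite leqn0 => /eqP -> A0; exists 0%N; split => //.
move=> le An.
case: (classic (exists k, (k < n)%N /\ A k)) => [[k [lt Ak]]|nk].
  by apply: (IH k) => //; rewrite -ltnS (leq_trans lt le).
exists n; split => // k Ak; rewrite leqNgt; apply/negP => lt; apply: nk; by exists k.
Qed.

Section Gauss.
Variable R : idomainType.
Implicit Types (a b c : R) (P Q f g h : {poly R}).

Lemma rdvdC_coef a P i : rdvd a%:P P -> rdvd a P`_i.
Proof. by case=> c ->; exists c`_i; rewrite coefCM. Qed.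

Lemma rdvdC_mulX a P : rdvd a%:P (P * 'X) -> rdvd a%:P P.
Proof.
case=> c E; exists (drop_poly 1 c); apply/polyP => i.
have := congr1 (fun p : {poly R} => p`_i.+1) E; rewrite /= coefMX /= => ->.
by rewrite !coefCM coef_drop_poly addn1.
Qed.

Lemma poly_split0 P : P = drop_poly 1 P * 'X + (P`_0)%:P.
Proof.
apply/polyP => i; rewrite coefD coefMX coefC coef_drop_poly.
  case: i => [|i] /=; first by rewrite add0r.
  by rewrite addr0 addn1.
Qed.

Lemma rdvdC_cons a P : rdvd a P`_0 -> rdvd a%:P (drop_poly 1 P) -> rdvd a%:P P.
Proof.
move=> [c0 e0] [c e]; rewrite (poly_split0 P) e e0.
by exists (c * 'X + c0%:P); rewrite mulrDr mulrA polyCM.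
Qed.

Lemma gauss_prime p : rprime p -> forall P Q, rdvd p%:P (P * Q) ->
  rdvd p%:P P \/ rdvd p%:P Q.
Proof.
case=> p0 pU pP.
suff H : forall N P Q, (size P + size Q <= N)%N -> rdvd p%:P (P * Q) ->
  rdvd p%:P P \/ rdvd p%:P Q by move=> P Q; apply: H.
elim=> [|N IH] P Q.
  rewrite leqn0 addn_eq0 size_poly_eq0 => /andP[/eqP -> _] _; left; exact: rdvd0.
move=> le dPQ.
have [->|P0] := eqVneq P 0; first by left; exact: rdvd0.
have [->|Q0] := eqVneq Q 0; first by right; exact: rdvd0.
have := rdvdC_coef 0 dPQ; rewrite coef0M => /pP [d0|d0].
  have e := poly_split0 P.
  have : rdvd p%:P ((drop_poly 1 P * Q) * 'X).
    have -> : drop_poly 1 P * Q * 'X = P * Q - (P`_0)%:P * Q.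
      by rewrite {2}e mulrDl addrK mulrAC.
    apply: rdvd_sub => //; case: d0 => c ->; exists (c%:P * Q); by rewrite polyCM mulrA.
  move/rdvdC_mulX => H.
  have sz : (size (drop_poly 1 P) + size Q <= N)%N.
    rewrite size_drop_poly; move: le; rewrite -size_poly_eq0 in P0; lia.
  case: (IH _ _ sz H) => [dP|dQ]; last by right.
  by left; apply: rdvdC_cons.
have e := poly_split0 Q.
have : rdvd p%:P ((P * drop_poly 1 Q) * 'X).
  have -> : P * drop_poly 1 Q * 'X = P * Q - P * (Q`_0)%:P.
    by rewrite {2}e mulrDr addrK mulrA.
  apply: rdvd_sub => //; case: d0 => c ->; exists (P * c%:P); by rewrite polyCM mulrCA.
move/rdvdC_mulX => H.
have sz : (size P + size (drop_poly 1 Q) <= N)%N.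
  rewrite size_drop_poly; move: le; rewrite -size_poly_eq0 in Q0; lia.
case: (IH _ _ sz H) => [dP|dQ]; first by left.
by right; apply: rdvdC_cons.
Qed.


Section UFD.
Variable mu : R -> nat.
Hypothesis Hmu : forall a b, a != 0 -> b != 0 -> b \notin GRing.unit -> (mu a < mu (b * a))%N.
Hypothesis Hpd : forall a, a != 0 -> a \notin GRing.unit -> exists2 p, rprime p & rdvd p a.

Definition prim f := forall p, rprime p -> ~ rdvd p%:P f.

Lemma strip f : prim f -> forall a X, a != 0 -> rdvd f (a%:P * X) -> rdvd f X.
Proof.
move=> pf a X a0; elim: (mu a) {-2}a (leqnn (mu a)) X a0 => [|N IH] b lb X b0 [c E].
- case: (boolP (b \is a GRing.unit)) => bU.
    exists (b^-1%:P * c); rewrite mulrCA -E mulrA -polyCM mulVr // mul1r //.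
  have [p pp [b' eb]] := Hpd b0 bU.
  have b'0 : b' != 0 by apply: contraNneq b0 => e0; rewrite eb e0 mulr0.
  case: pp => p0 pU _.
  have h := Hmu b'0 p0 pU; rewrite -eb in h.
  by move: lb h; case: (mu b).
- case: (boolP (b \is a GRing.unit)) => bU.
    exists (b^-1%:P * c); rewrite mulrCA -E mulrA -polyCM mulVr // mul1r //.
  have [p pp [b' eb]] := Hpd b0 bU.
  case: (pp) => p0 pU _.
  have b'0 : b' != 0 by apply: contraNneq b0 => e0; rewrite eb e0 mulr0.
  have : rdvd p%:P (f * c) by rewrite -E eb polyCM -mulrA; exists (b'%:P * X).
  case/gauss_prime => // [/pf//|[c' ec']].
  apply: (IH b') => //.
    by have h := Hmu b'0 p0 pU; rewrite -eb in h; rewrite -ltnS (leq_trans h lb).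
  exists c'; apply: (@mulfI _ p%:P); first by rewrite polyC_eq0.
  by rewrite mulrA -polyCM -eb E ec' mulrCA.
Qed.


Lemma rdvd_assoc (T : comUnitRingType) (a b u : T) : u \is a GRing.unit -> a = b * u ->
  forall x, rdvd a x -> rdvd b x.
Proof. by move=> uU -> x [t ->]; exists (u * t); rewrite mulrA. Qed.

Lemma rdvd_assoc' (T : comUnitRingType) (a b u : T) : u \is a GRing.unit -> a = b * u ->
  forall x, rdvd b x -> rdvd a x.
Proof.
move=> uU e x [t ->]; exists (u^-1 * t); rewrite e -mulrA; congr (_ * _).
by rewrite mulrA divrr // mul1r.
Qed.

Lemma polyCU c : (c%:P \is a GRing.unit) = (c \is a GRing.unit).
Proof.
rewrite poly_unitE coefC /=; case: (boolP (c \is a GRing.unit)) => cU; last by rewrite andbF.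
rewrite size_polyC andbT; have [c0|] := eqVneq c 0; last by [].
by rewrite c0 unitr0 in cU.

Qed.

Lemma irred_prime_R c : rirred c -> rprime c.
Proof.
case=> c0 cU cI; have [p pp [c' e]] := Hpd c0 cU.
case: (pp) => p0 pU pP.
case: (cI _ _ e) => [pU'|c'U]; first by rewrite pU' in pU.
split => // x y /(rdvd_assoc c'U e) /pP [] h; [left|right];
  exact: (rdvd_assoc' c'U e).
Qed.

Lemma irred_prime_poly f : rirred f -> rprime f.
Proof.
move=> fI; case: (fI) => f0 fU fI'.
have [sf|sf] := leqP (size f) 1.
  have [c ec] : exists c, f = c%:P.
    by exists f`_0; apply/size1_polyC.
  have cI : rirred c.
    split.
    - by apply: contraNneq f0 => e0; rewrite ec e0.
    - by rewrite -polyCU -ec.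
    - move=> x y exy; have := fI' x%:P y%:P; rewrite ec exy polyCM => /(_ erefl).
      by rewrite !polyCU.
  have [_ _ cP] := irred_prime_R cI.
  split => // g h; rewrite ec => /(gauss_prime (irred_prime_R cI)); by [].
have pf : prim f.
  move=> p [p0 pU _] [f' ef].
  case: (fI' _ _ ef); first by rewrite polyCU (negbTE pU).
  rewrite poly_unitE => /andP[/eqP sf' _].
  by move: sf; rewrite ef size_Cmul // sf'.
split => // g h dgh.
pose I P := rdvd f (P * h).
have [->|g0] := eqVneq g 0; first by left; exact: rdvd0.
have Ig : I g by [].
have [k [[Pa [Pa0 [IPa sPa]]] kmin]] :=
  ex_minP (A := fun k => exists P, P != 0 /\ I P /\ size P = k) (ex_intro _ g (conj g0 (conj Ig erefl))).
have [j [[P [P0 [IP [sP mP]]]] jmin]] :=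
  ex_minP (A := fun j => exists P, P != 0 /\ I P /\ size P = k /\ mu (lead_coef P) = j)
    (ex_intro _ Pa (conj Pa0 (conj IPa (conj sPa erefl)))).
have kmin' : forall Q, Q != 0 -> I Q -> (k <= size Q)%N.
  by move=> Q Q0 IQ; apply: kmin; exists Q.
have pP : prim P.
  move=> p [p0 pU _] [P' eP].
  have P'0 : P' != 0 by apply: contraNneq P0 => e0; rewrite eP e0 mulr0.
  have IP' : I P'.
    by apply: (strip pf p0); rewrite mulrA -eP.
  have sP' : size P' = k by rewrite -sP eP size_Cmul.
  have h1 := jmin (mu (lead_coef P')) (ex_intro _ P' (conj P'0 (conj IP' (conj sP' erefl)))).
  have h2 : (mu (lead_coef P') < mu (p * lead_coef P'))%N.
    by apply: Hmu => //; rewrite lead_coef_eq0.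
  by move: h2; rewrite -(lead_coefC p) -lead_coefM -eP mP ltnNge h1.
have rem : forall G, I G -> rdvd P ((lead_coef P ^+ scalp G P)%:P * G).
  move=> G IG.
  have e := Pdiv.Idomain.divp_eq G P.
  have : G %% P = 0.
    apply/eqP; apply: contraT => r0.
    have : I (G %% P).
      have -> : G %% P = (lead_coef P ^+ scalp G P) *: G - G %/ P * P.
        by rewrite e addrC addKr.
      rewrite /I mulrBl -scalerAl -mul_polyC; apply: rdvd_sub.
        exact: rdvd_mull.
      by rewrite -mulrA; apply: rdvd_mull.
    move/(kmin' _ r0); rewrite -sP leqNgt Pdiv.Idomain.ltn_modp P0 //.
  move=> r0; exists (G %/ P); rewrite mul_polyC e r0 addr0 mulrC //.
have lc0 : forall G, (lead_coef P ^+ scalp G P) != 0.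
  by move=> G; rewrite expf_neq0 // lead_coef_eq0.
have [Q eQ] := strip pP (lc0 f) (rem f (rdvd_mulr h (rdvd_refl f))).
case: (fI' _ _ eQ) => [PU|QU].
  right; case: IP => t et; exists (P^-1 * t).
  by rewrite mulrCA -et mulrA mulVr // mul1r.
left; apply: (strip pf (lc0 g)).
apply: (rdvd_assoc' QU eQ); exact: rem.
Qed.

End UFD.
End Gauss.

Local Notation widen := (widen_ord (leqnSn _)).

Section MUni.
Variable (n : nat) (R : idomainType).

Definition mlow (m : 'X_{1..n.+1}) : 'X_{1..n} := [multinom m (widen i) | i < n].

Lemma muniXm (m : 'X_{1..n.+1}) :
  muni 'X_[m] = ('X_[mlow m] : {mpoly R[n]})%:P * 'X^(m ord_max).
Proof.
by rewrite muniE msuppX big_seq1 mcoeffX eqxx scale1r mul_polyC.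
Qed.

Lemma mlow_widen m : mlow (mnmwiden m) = m.
Proof. by apply/mnmP => i; rewrite mnmE mnmwiden_widen. Qed.

Lemma muni_mwiden (c : {mpoly R[n]}) : muni (mwiden c) = c%:P.
Proof.
elim/mpolyind: c => [|c m p _ _ IH]; first by rewrite raddf0 muni0.
rewrite raddfD /= muniD IH mwidenZ muniZ mwidenX muniXm mlow_widen.
by rewrite mnmwiden_ordmax expr0 mulr1 polyCD -mul_polyC -polyCM mul_mpolyC.
Qed.

Lemma muniXmax : muni ('X_ord_max : {mpoly R[n.+1]}) = 'X.
Proof.
rewrite muniXm; have -> : mlow U_(ord_max) = 0%MM.
  by apply/mnmP => i; rewrite !mnmE /= eq_sym; case: i => i /= lt; rewrite eqE /= ltn_eqF.
by rewrite mpolyX0 mnm1E eqxx expr1 mul1r.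
Qed.

Lemma muni_surj (P : {poly {mpoly R[n]}}) : exists p, muni p = P.
Proof.
elim/poly_ind: P => [|P c [p ep]]; first by exists 0; rewrite muni0.
exists (p * 'X_ord_max + mwiden c).
by rewrite muniD muniM ep muniXmax muni_mwiden.
Qed.

Lemma mmultiW (P : {poly {mpoly R[n]}}) k : (size P <= k)%N ->
  mmulti P = \sum_(i < k) mwiden P`_i * 'X_ord_max ^+ i.
Proof.
move=> le; rewrite /mmulti (big_ord_widen k (fun i => mwiden P`_i * 'X_ord_max ^+ i)) //.
rewrite big_mkcond /=; apply: eq_bigr => i _; case: ltnP => // h.
by rewrite nth_default // raddf0 mul0r.
Qed.

Lemma mmultiD (P Q : {poly {mpoly R[n]}}) : mmulti (P + Q) = mmulti P + mmulti Q.
Proof.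
pose k := maxn (size P) (size Q).
rewrite (mmultiW (k := k)) ?(leq_trans (size_add _ _)) //.
rewrite (mmultiW (k := k)) ?leq_maxl // (mmultiW (k := k) (P := Q)) ?leq_maxr //.
rewrite -big_split /=; apply: eq_bigr => i _.
by rewrite coefD raddfD mulrDl.
Qed.

Lemma mmulti_mon (a : {mpoly R[n]}) k : mmulti (a%:P * 'X^k) = mwiden a * 'X_ord_max ^+ k.
Proof.
rewrite (mmultiW (k := k.+1)); last by rewrite mul_polyC (leq_trans (size_scale_leq _ _)) // size_polyXn.
rewrite big_ord_recr /= big1 ?add0r.
  by rewrite coefCM coefXn eqxx mulr1.
by move=> i _; rewrite coefCM coefXn ltn_eqF // mulr0 raddf0 mul0r.
Qed.

Lemma mmultiK (p : {mpoly R[n.+1]}) : mmulti (muni p) = p.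
Proof.
elim/mpolyind: p => [|c m p _ _ IH].
  by rewrite muni0 /mmulti size_poly0 big_ord0.
rewrite muniD mmultiD.
rewrite [X in _ + X = _]IH.
congr (_ + _).
rewrite muniZ muniXm scalerAl scale_polyC mul_mpolyC mmulti_mon.
rewrite mwidenZ mwidenX -scalerAl; congr (_ *: _).
rewrite mpolyXn -mpolyXD; congr 'X_[_]; apply/mnmP => i.
rewrite mnmDE mulmnE mnm1E.
case: (unliftP ord_max i) => [j ->|->].
  have -> : lift ord_max j = widen j by apply/val_inj; rewrite /= /bump leqNgt ltn_ord.
  by rewrite mnmwiden_widen mnmE eqE /= gtn_eqF // mul0n addn0.
have := mnmwiden_ordmax (mlow m); rewrite /= => ->; by rewrite eqxx mul1n.
Qed.

Lemma muni_inj : injective (@muni n R).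
Proof. by move=> p q e; rewrite -(mmultiK p) -(mmultiK q) e. Qed.

End MUni.

Section Eval.
Variable (n : nat) (K : fieldType).

Definition vlow (v : 'I_n.+1 -> K) : 'I_n -> K := fun i => v (widen i).

Lemma meval_muni (p : {mpoly K[n.+1]}) (v : 'I_n.+1 -> K) :
  p.@[v] = (map_poly (meval (vlow v)) (muni p)).[v ord_max].
Proof.
elim/mpolyind: p => [|c m p _ _ IH]; first by rewrite meval0 muni0 map_poly0 horner0.
rewrite mevalD muniD rmorphD hornerD [X in _ + X = _]IH; congr (_ + _).
rewrite muniZ muniXm mevalZ mevalX /= map_polyZ hornerZ rmorphM /= map_polyC map_polyXn.
rewrite hornerM hornerXn hornerC /= mevalC mevalX big_ord_recr /=; congr (_ * (_ * _)).
by apply: eq_bigr => i _; rewrite mnmE.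
Qed.

End Eval.


Section Closed.
Variable K : closedFieldType.

Lemma poly_nonroot (P : {poly K}) : P != 0 -> exists t, P.[t] != 0.
Proof.
move=> P0; have sP : (0 < size P)%N by rewrite size_poly_gt0.
have sXP : size (P * 'X) = (size P).+1 by rewrite size_mulX.
have : size (P * 'X - 1) != 1%N.
  by rewrite size_addl ?size_opp ?size_poly1 sXP //; case: (size P) sP.
case/closed_rootP => t; rewrite rootE !hornerE => /eqP /subr0_eq h.
by exists t; apply: contra_eq_neq h => ->; rewrite mul0r eq_sym oner_eq0.
Qed.

Lemma poly_allroot (P : {poly K}) : (forall t, P.[t] = 0) -> P = 0.
Proof. by move=> h; apply: contraTeq isT => /poly_nonroot [t]; rewrite h eqxx. Qed.

Lemma dvdp_roots (E G : {poly K}) : E != 0 -> (forall t, root E t -> root G t) ->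
  E %| G ^+ (size E).-1.
Proof.
move=> E0 hr; have [rs ers] := closed_field_poly_normal E.
have lc0 : lead_coef E != 0 by rewrite lead_coef_eq0.
have sE : size E = (size rs).+1 by rewrite {1}ers size_scale // size_prod_XsubC.
rewrite sE /= ers dvdpZl //.
have : forall z, z \in rs -> root G z.
  move=> z zr; apply: hr; rewrite ers rootZ // root_prod_XsubC //.
elim: (rs) => [|z r IH] h; first by rewrite big_nil expr0 dvdpp.
rewrite big_cons exprS; apply: dvdp_mul.
  by rewrite -root_factor_theorem; apply: h; rewrite mem_head.
by apply: IH => y yr; apply: h; rewrite in_cons yr orbT.
Qed.

Definition vext n (v : 'I_n -> K) (t : K) : 'I_n.+1 -> K :=
  fun i => oapp v t (insub (val i)).

Lemma vlow_ext n (v : 'I_n -> K) t : vlow (vext v t) =1 v.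
Proof.
move=> i; rewrite /vlow /vext /= insubT //= => h.
by congr v; apply/val_inj.
Qed.

Lemma vext_max n (v : 'I_n -> K) t : vext v t ord_max = t.
Proof. by rewrite /vext insubF //= ltnn. Qed.

Lemma meval_ext n (p : {mpoly K[n.+1]}) v t :
  p.@[vext v t] = (map_poly (meval v) (muni p)).[t].
Proof.
rewrite meval_muni vext_max; congr (_.[_]); apply: eq_map_poly => q.
exact: meval_eq (vlow_ext v t).
Qed.

Lemma mpoly_nonvanish n (p : {mpoly K[n]}) : p != 0 -> exists v, p.@[v] != 0.
Proof.
elim: n p => [|n IH] p p0.
  have : (msize p <= 1)%N.
    rewrite msizeE; apply/bigmax_leqP_seq => m _ _.
    by rewrite mdegE big_ord0.
  move/msize1_polyC => ep; exists (fun _ => 0); rewrite ep mevalC.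
  by apply: contraNneq p0 => e0; rewrite ep e0.
have P0 : muni p != 0.
  by apply: contraNneq p0 => e; apply/eqP; apply: (@muni_inj n K); rewrite e muni0.
have [v hv] : exists v, (lead_coef (muni p)).@[v] != 0 by apply: IH; rewrite lead_coef_eq0.
have Q0 : map_poly (meval v) (muni p) != 0.
  rewrite -size_poly_eq0 size_map_poly_id0 ?size_poly_eq0 //.
have [t ht] := poly_nonroot Q0.
by exists (vext v t); rewrite meval_ext.
Qed.

Lemma mpoly_allzero n (p : {mpoly K[n]}) : (forall v, p.@[v] = 0) -> p = 0.
Proof.
by move=> h; apply: contraTeq isT => /mpoly_nonvanish [v]; rewrite h eqxx.
Qed.

End Closed.


Section Iso.
Variables (A B : comUnitRingType) (phi : {rmorphism A -> B}).
Hypothesis phi_inj : injective phi.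
Hypothesis phi_surj : forall b, exists a, phi a = b.

Lemma iso_unit a : (phi a \is a GRing.unit) = (a \is a GRing.unit).
Proof.
apply/idP/idP => [|h]; last exact: rmorph_unit.
case/unitrP => b [h1 h2]; have [c ec] := phi_surj b.
apply/unitrP; exists c; split; apply: phi_inj; by rewrite rmorphM rmorph1 ec.
Qed.

Lemma iso_rdvd a b : rdvd (phi a) (phi b) <-> rdvd a b.
Proof.
split => [[C eC]|[c ->]]; last by exists (phi c); rewrite rmorphM.
have [c ec] := phi_surj C; exists c; apply: phi_inj; by rewrite rmorphM ec.
Qed.

Lemma iso_irred a : rirred a -> rirred (phi a).
Proof.
case=> a0 aU aI; split.
- by apply: contraNneq a0 => e; apply/eqP/phi_inj; rewrite e rmorph0.
- by rewrite iso_unit.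
- move=> X Y e; have [x ex] := phi_surj X; have [y ey] := phi_surj Y.
  have : a = x * y by apply: phi_inj; rewrite rmorphM ex ey.
  by case/aI => h; [left; rewrite -ex iso_unit | right; rewrite -ey iso_unit].
Qed.

Lemma iso_prime a : rprime (phi a) -> rprime a.
Proof.
case=> a0 aU aP; split.
- by apply: contraNneq a0 => ->; rewrite rmorph0.
- by rewrite -iso_unit.
- move=> x y; rewrite -iso_rdvd rmorphM => /aP [] /iso_rdvd h; by [left|right].
Qed.
End Iso.

Section MUnits.
Variable (K : fieldType) (n : nat).
Implicit Types p q : {mpoly K[n]}.

Lemma mpoly_unitE p : (p \is a GRing.unit) = (msize p == 1%N).
Proof.
apply/idP/idP.
  case/andP => /eqP ep u.
  have c0 : p@_0 != 0 by apply: contraTneq u => ->; rewrite unitr0.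
  by rewrite ep msizeC c0.
case/msize_poly1P => c c0 ->; apply/andP; split; first by rewrite mcoeffC eqxx mulr1.
by rewrite mcoeffC eqxx mulr1 unitfE.
Qed.

Lemma msize_nonunit p : p != 0 -> p \notin GRing.unit -> (1 < msize p)%N.
Proof.
rewrite mpoly_unitE -msize_poly_eq0; case: (msize p) => [|[|k]] //.
Qed.

Lemma msize_mul_lt p q : p != 0 -> q != 0 -> q \notin GRing.unit -> (msize p < msize (q * p))%N.
Proof.
move=> p0 q0 qU; have h := msize_nonunit q0 qU; rewrite msizeM //.
rewrite -msize_poly_eq0 in p0; move: h p0; move: (msize q) (msize p) => a b; lia.
Qed.

Lemma irred_factor p : p != 0 -> p \notin GRing.unit -> exists2 e, rirred e & rdvd e p.
Proof.
elim: (msize p) {-2}p (leqnn (msize p)) => [|N IH] a la a0 aU.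
  by rewrite leqn0 msize_poly_eq0 (negbTE a0) in la.
case: (classic (rirred a)) => [aI|naI]; first by exists a => //; exact: rdvd_refl.
have [x [y [exy nU]]] : exists x y, a = x * y /\ ~ (x \is a GRing.unit \/ y \is a GRing.unit).
  apply: NNPP => H; apply: naI; split => // x y e.
  by apply: NNPP => h; apply: H; exists x, y.
have x0 : x != 0 by apply: contraNneq a0 => e0; rewrite exy e0 mul0r.
have y0 : y != 0 by apply: contraNneq a0 => e0; rewrite exy e0 mulr0.
have xU : x \notin GRing.unit by apply/negP => h; apply: nU; left.
have yU : y \notin GRing.unit by apply/negP => h; apply: nU; right.
have lt : (msize x < msize a)%N by rewrite exy mulrC; apply: msize_mul_lt.
have lx : (msize x <= N)%N by rewrite -ltnS (leq_trans lt la).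
have [e eI de] := IH x lx x0 xU.
by exists e => //; rewrite exy; apply: rdvd_mulr.
Qed.
End MUnits.

Section UFDm.
Variable K : fieldType.

Lemma msize_0vars (p : {mpoly K[0]}) : (msize p <= 1)%N.
Proof. by rewrite msizeE; apply/bigmax_leqP_seq => m _ _; rewrite mdegE big_ord0. Qed.

Lemma muni_surj' n (P : {poly {mpoly K[n]}}) : exists p, muni p = P.
Proof. exact: muni_surj. Qed.

Lemma mpoly_irred_prime n (f : {mpoly K[n]}) : rirred f -> rprime f.
Proof.
elim: n f => [|n IH] f.
  case=> f0 fU _; exfalso; move/negP: fU; apply.
  rewrite mpoly_unitE eqn_leq msize_0vars /= lt0n msize_poly_eq0 //.
move=> fI.
have Hpd : forall a : {mpoly K[n]}, a != 0 -> a \notin GRing.unit ->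
    exists2 p, rprime p & rdvd p a.
  move=> a a0 aU; have [e eI de] := irred_factor a0 aU.
  by exists e => //; apply: IH.
have Hmu : forall a b : {mpoly K[n]}, a != 0 -> b != 0 -> b \notin GRing.unit ->
    (msize a < msize (b * a))%N by move=> a b; apply: msize_mul_lt.
have inj := @muni_inj n K.
have := @irred_prime_poly _ _ Hmu Hpd (muni f) (iso_irred inj (@muni_surj' n) fI).
exact: (iso_prime inj (@muni_surj' n)).
Qed.
End UFDm.


Lemma rdvdC_all (R : idomainType) (a : R) (P : {poly R}) :
  (forall i, rdvd a P`_i) -> rdvd a%:P P.
Proof.
elim: (size P) {-2}P (leqnn (size P)) => [|N IH] Q sQ h.
  by move: sQ; rewrite leqn0 size_poly_eq0 => /eqP ->; exact: rdvd0.
apply: rdvdC_cons; first exact: h.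
apply: IH; first by rewrite size_drop_poly; lia.
by move=> i; rewrite coef_drop_poly; apply: h.
Qed.

Lemma rirredC (R : idomainType) (c : R) : rirred c%:P -> rirred c.
Proof.
case=> c0 cU cI; split.
- by apply: contraNneq c0 => ->.
- by rewrite -polyCU.
- move=> x y e; have := cI x%:P y%:P; rewrite e polyCM => /(_ erefl).
  by rewrite !polyCU.
Qed.

Lemma prime_exp (R : comUnitRingType) (e x : R) k : rprime e -> rdvd e (x ^+ k) -> rdvd e x.
Proof.
case=> e0 eU eP; elim: k => [|k IH].
  rewrite expr0 => -[c ec]; exfalso; move/negP: eU; apply.
  by apply/unitrP; exists c; rewrite mulrC -ec.
by rewrite exprS => /eP [] // /IH.
Qed.

Section Core.
Variable K : closedFieldType.

Lemma irred0 (f : {mpoly K[0]}) : ~ rirred f.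
Proof.
case=> f0 fU _; move/negP: fU; apply.
by rewrite mpoly_unitE eqn_leq msize_0vars /= lt0n msize_poly_eq0.
Qed.

Lemma core n (e g : {mpoly K[n]}) : rirred e ->
  (forall v, e.@[v] = 0 -> g.@[v] = 0) -> rdvd e g.
Proof.
elim: n e g => [|n IH] e g eI; first by case: (irred0 eI).
move=> hv.
have inj := @muni_inj n K.
have surj := @muni_surj' K n.
have EI : rirred (muni e) := iso_irred inj surj eI.
have hE := fun v' t => esym (meval_ext e v' t).
have hG := fun v' t => esym (meval_ext g v' t).
have tr1 : rdvd (muni e) (muni g) -> rdvd e g by move/(iso_rdvd inj surj).
have tr2 : forall a k, rdvd (muni e) (a%:P * (muni g) ^+ k) -> rdvd e (mwiden a * g ^+ k).
  by move=> a k; rewrite -muni_mwiden -rmorphXn -rmorphM => /(iso_rdvd inj surj).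
have tr3 : forall a, rdvd e (mwiden a) -> rdvd (muni e) a%:P.
  move=> a h; rewrite -muni_mwiden; exact: (proj2 (iso_rdvd inj surj _ _) h).
have eP := mpoly_irred_prime eI.
move: EI hE hG tr1 tr2 tr3; move: (muni e) (muni g) => E G EI hE hG tr1 tr2 tr3.
have E0 : E != 0 by case: EI.
have [sE|sE] := leqP (size E) 1.
  apply: tr1.
  have [c ec] : exists c, E = c%:P by exists E`_0; apply/size1_polyC.
  rewrite ec in EI hE *; have cI := rirredC EI.
  apply: rdvdC_all => i; apply: IH => // v' cv.
  have mG : map_poly (meval v') G = 0.
    apply: poly_allroot => t; rewrite hG; apply: hv.
    by rewrite -hE map_polyC hornerC.
  by have := congr1 (fun p : {poly K} => p`_i) mG; rewrite /= coef_map coef0.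
pose c := lead_coef E.
have c0 : c != 0 by rewrite lead_coef_eq0.
pose N := (size E).-1.
pose s := scalp (G ^+ N) E.
pose Q := Pdiv.Idomain.divp (G ^+ N) E.
pose rho := Pdiv.Idomain.modp (G ^+ N) E.
have de : (c ^+ s) *: G ^+ N = Q * E + rho := Pdiv.Idomain.divp_eq (G ^+ N) E.
have srho : (size rho < size E)%N by rewrite Pdiv.Idomain.ltn_modp.
have rho0 : rho = 0.
  apply/polyP => i; rewrite coef0; apply: (@mulfI _ c) => //; rewrite mulr0.
  apply: mpoly_allzero => v'; rewrite mevalM.
  have [cv|cv] := eqVneq c.@[v'] 0; first by rewrite cv mul0r.
  set ev := map_poly (meval v').
  have sE' : size (ev E) = size E by rewrite size_map_poly_id0.
  have E'0 : ev E != 0 by rewrite -size_poly_eq0 sE' size_poly_eq0.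
  have dv : ev E %| (ev G) ^+ (size (ev E)).-1.
    apply: (dvdp_roots E'0) => t.
    by rewrite /root hE hG => /eqP /hv ->.
  have : ev E %| ev rho.
    have -> : ev rho = (c.@[v'] ^+ s) *: ev (G ^+ N) - ev Q * ev E.
      by rewrite -rmorphXn -map_polyZ -rmorphM -rmorphB de addrC addKr.
    apply: dvdp_sub; last exact: dvdp_mull.
    rewrite dvdpZr ?expf_neq0 // /ev (rmorphXn (map_poly (meval v'))) -/ev /N -sE'; exact: dv.
  move=> dr.
  have er : ev rho = 0.
    apply: contraTeq srho => nz; rewrite -leqNgt -sE'.
    apply: (leq_trans (dvdp_leq nz dr)); exact: size_poly.
  have := congr1 (fun p : {poly K} => p`_i) er; rewrite /= coef_map coef0 => ->.
  by rewrite mulr0.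
have dEG : rdvd E ((c ^+ s)%:P * G ^+ N).
  by exists Q; rewrite mul_polyC de rho0 addr0 mulrC.
have := tr2 _ _ dEG; have eP' := eP; case: eP' => _ _ eP3.
case/eP3 => h; last exact: (prime_exp eP h).
rewrite rmorphXn in h; have [C eC] := tr3 _ (prime_exp eP h).
have C0 : C != 0 by apply: contra_eq_neq eC => ->; rewrite mulr0 polyC_eq0.
have := congr1 (fun p : {poly {mpoly K[n]}} => size p) eC; rewrite /= size_polyC c0 size_mul //.
move: sE; rewrite -size_poly_eq0 in C0; move: C0; move: (size C) (size E) => a b; lia.
Qed.

End Core.

Theorem theorem4p4 (K : closedFieldType) (Hchar : [pchar K] =i pred0)
  (F : {mpoly K[4]}) (q : 'I_4 -> {mpoly K[3]}) (s : 3.-tuple {mpoly K[3]}) :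
  proj_surface F ->
  homog_same_deg q -> gcd_is_one q ->
  image_dense_in q (zero_set F) ->
  homog_same_deg (tnth s) -> gcd_is_one (tnth s) ->
  dominant (tnth s) ->
  (~ exists A : 'I_3 -> K, is_base_point q A) ->
  gcd_is_one (fun i : 'I_4 => q i \mPo s).
Proof.
move=> _ _ _ _ _ gs _ nbp d hd.
apply: NNPP => nc.
have d0 : d != 0.
  by apply/eqP => e0; apply: nc; rewrite /mconst e0 msize0.
have dU : d \notin GRing.unit.
  by rewrite mpoly_unitE; apply/negP => /eqP h; apply: nc; rewrite /mconst h.
have [e eI [c1 ec1]] := irred_factor d0 dU.
have ne : ~ mconst e.
  case: (eI) => e0 eU _; rewrite /mconst => h.
  by have := msize_nonunit e0 eU; rewrite ltnNge h.
have [j nj] : exists j, ~ mdivides e (tnth s j).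
  apply: NNPP => H; apply: ne; apply: gs => i; apply: NNPP => h; apply: H; by exists i.
have [v [ev sv]] : exists v, e.@[v] = 0 /\ (tnth s j).@[v] <> 0.
  apply: NNPP => H; apply: nj; apply: (core eI) => v ev.
  by apply: NNPP => h; apply: H; exists v.
apply: nbp; exists (fun k => (tnth s k).@[v]); split.
  by exists j; apply/eqP.
move=> i; rewrite -comp_mpoly_meval; have [c ec] := hd i.
by rewrite ec ec1 !mevalM ev !mul0r.
Qed.
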